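(* Let $(V,\nu)$ be a strongly complete PN-space, $(W,\mu)$ a PN-space, and $(T_n)_{n\in\mathbb{N}}$ a sequence in $B(V,W)$ such that $\sup_{n\in\mathbb{N}}\|T_nx\|_{w'}<\infty$ for every $x\in V$ and every $w'\in(0,1)$. Then for every $w'\in(0,1)$ there exists $w\in(0,1)$ such that $\sup_{n\in\mathbb{N}}\|T_n\|_{(w,w')}<\infty$.
   Context: A distance distribution function is a map $F:[-\infty,+\infty]\to[0,1]$ that is nondecreasing, left-continuous on $\mathbb{R}$, with $F(-\infty)=0$, $F(+\infty)=1$ and $F(0)=0$; the set of these is $\Delta^+$. $\mathcal{D}^+\subseteq\Delta^+$ denotes the proper ones, i.e. those with $\lim_{x\to+\infty}F(x)=1$. $H_0\in\Delta^+$ is $H_0(x)=0$ for $x\le 0$ and $H_0(x)=1$ for $x>0$. For $F,G\in\Delta^+$ let $\tau_M(F,G)(x)=\sup\{\min(F(s),G(t)) : s+t=x\}$. In this paper a PN-space $(V,\nu)$ is a real vector space $V$ with a map $\nu:V\to\Delta^+$, $p\mapsto\nu_p$, such that for all $p,q\in V$: $\nu_p=H_0$ iff $p=0$; $\nu_{p+q}\ge\tau_M(\nu_p,\nu_q)$ pointwise; and $\nu_{\alpha p}(x)=\nu_p(x/|\alpha|)$ for all real $\alpha\neq0$ and $x\ge 0$. Standing assumption: $\nu_p\in\mathcal{D}^+$ for every $p\in V$. For $x\in V$ and $w\in(0,1)$ put $\|x\|_w=\sup\{t\in\mathbb{R}:\nu_x(t)<w\}$ (in $W$ analogously using $\mu$);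 for each $w$ this is a norm, and $w\mapsto\|x\|_w$ is nondecreasing. The strong topology on $V$ is generated by the neighbourhoods $N_p(t)=\{q\in V:\nu_{p-q}(t)>1-t\}$, $p\in V$, $t>0$; equivalently the balls $\{x:\|x-p\|_w<r\}$ form a basis for it. A sequence $(p_n)$ converges strongly to $p$ if for every $t>0$ one has $p_n\in N_p(t)$ for all large $n$; it is strongly Cauchy if for every $t>0$ there is $N$ with $\nu_{p_n-p_m}(t)>1-t$ for all $m,n>N$. $(V,\nu)$ is strongly complete if every strongly Cauchy sequence converges strongly. $B(V,W)$ denotes the set of linear operators $V\to W$ that are continuous for the strong topologies. For a linear $T:V\to W$ and $w,w'\in(0,1)$, $\|T\|_{(w,w')}=\sup\{\|Tx\|_{w'}: x\in V,\ \|x\|_w\le 1\}\in[0,+\infty]$. *)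

(* Defs.v *)
From Stdlib Require Import Reals Lra Classical ClassicalEpsilon.
Open Scope R_scope.

Record RVectorSpace := {
  vcar :> Type;
  vzero : vcar;
  vadd : vcar -> vcar -> vcar;
  vopp : vcar -> vcar;
  vscal : R -> vcar -> vcar;
  vadd_assoc : forall x y z, vadd x (vadd y z) = vadd (vadd x y) z;
  vadd_comm : forall x y, vadd x y = vadd y x;
  vadd_zero : forall x, vadd x vzero = x;
  vadd_opp : forall x, vadd x (vopp x) = vzero;
  vscal_one : forall x, vscal 1 x = x;
  vscal_assoc : forall a b x, vscal a (vscal b x) = vscal (a * b) x;
  vscal_distr_v : forall a x y, vscal a (vadd x y) = vadd (vscal a x) (vscal a y);
  vscal_distr_s : forall a b x, vscal (a + b) x = vadd (vscal a x) (vscal b x)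
}.

Arguments vzero {_}.
Arguments vadd {_} _ _.
Arguments vopp {_} _.
Arguments vscal {_} _ _.

Definition vsub {V : RVectorSpace} (x y : V) : V := vadd x (vopp y).

(** The values at -oo (=0) and +oo (=1) are fixed by convention and carry
    no information, so F is represented by its restriction R -> R. *)
Definition is_ddf (F : R -> R) : Prop :=
  (forall x, 0 <= F x <= 1) /\
  (forall x y, x <= y -> F x <= F y) /\
  (forall x eps, 0 < eps -> exists d, 0 < d /\
       forall y, x - d < y < x -> Rabs (F x - F y) < eps) /\
  F 0 = 0.

Definition is_proper_ddf (F : R -> R) : Prop :=
  is_ddf F /\
  (forall eps, 0 < eps -> exists M, forall x, M <= x -> Rabs (F x - 1) < eps).

Definition H0 (x : R) : R := if Rle_dec x 0 then 0 else 1.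

Definition tauM_set (F G : R -> R) (x : R) : R -> Prop :=
  fun v => exists s t, s + t = x /\ v = Rmin (F s) (G t).

Definition tauM_is (F G : R -> R) (x y : R) : Prop := is_lub (tauM_set F G x) y.

(** PN-spaces (with the standing assumption nu_p proper). *)
Record is_PN_space (V : RVectorSpace) (nu : V -> R -> R) : Prop := {
  pn_ddf : forall p, is_proper_ddf (nu p);
  pn_H0 : forall p, (forall x, nu p x = H0 x) <-> p = vzero;
  pn_tri : forall p q x y, tauM_is (nu p) (nu q) x y -> y <= nu (vadd p q) x;
  pn_scal : forall p a x, a <> 0 -> 0 <= x -> nu (vscal a p) x = nu p (x / Rabs a)
}.

Definition Rsup_of (E : R -> Prop) : R := epsilon (inhabits 0) (fun l => is_lub E l).

Definition pnorm {V : RVectorSpace} (nu : V -> R -> R) (w : R) (x : V) : R :=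
  Rsup_of (fun t => nu x t < w).

Definition Nbhd {V : RVectorSpace} (nu : V -> R -> R) (p : V) (t : R) : V -> Prop :=
  fun q => nu (vsub p q) t > 1 - t.

Definition strong_open {V : RVectorSpace} (nu : V -> R -> R) (U : V -> Prop) : Prop :=
  forall p, U p -> exists t, 0 < t /\ forall q, Nbhd nu p t q -> U q.

Definition strong_continuous {V W : RVectorSpace} (nu : V -> R -> R) (mu : W -> R -> R)
  (T : V -> W) : Prop :=
  forall U, strong_open mu U -> strong_open nu (fun x => U (T x)).

Definition is_linear {V W : RVectorSpace} (T : V -> W) : Prop :=
  (forall x y, T (vadd x y) = vadd (T x) (T y)) /\
  (forall a x, T (vscal a x) = vscal a (T x)).

Definition in_B {V W : RVectorSpace} (nu : V -> R -> R) (mu : W -> R -> R)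
  (T : V -> W) : Prop := is_linear T /\ strong_continuous nu mu T.

Definition strong_converges {V : RVectorSpace} (nu : V -> R -> R) (p : nat -> V) (l : V)
  : Prop :=
  forall t, 0 < t -> exists N, forall n, (N <= n)%nat -> Nbhd nu l t (p n).

Definition strong_cauchy {V : RVectorSpace} (nu : V -> R -> R) (p : nat -> V) : Prop :=
  forall t, 0 < t -> exists N, forall m n, (N < m)%nat -> (N < n)%nat ->
    nu (vsub (p n) (p m)) t > 1 - t.

Definition strongly_complete {V : RVectorSpace} (nu : V -> R -> R) : Prop :=
  forall p, strong_cauchy nu p -> exists l, strong_converges nu p l.

(* Main.v *)
Require Import Defs.
From Stdlib Require Import Reals Lra Classical ClassicalEpsilon ZArith Lia.
Open Scope R_scope.

Lemma nat_arch (r : R) : exists N : nat, r < INR N.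
Proof.
  destruct (archimed r) as [H1 _].
  destruct (Z_le_gt_dec 0 (up r)) as [Hz|Hz].
  - exists (Z.to_nat (up r)). rewrite INR_IZR_INZ, Z2Nat.id by exact Hz. lra.
  - exists 0%nat. simpl. apply Z.gt_lt in Hz. apply IZR_lt in Hz. lra.
Qed.

Lemma vadd_zero_l (V : RVectorSpace) (x:V) : vadd vzero x = x.
Proof. rewrite vadd_comm; apply vadd_zero. Qed.

Lemma vadd_cancel (V : RVectorSpace) (a b c : V) : vadd a b = vadd a c -> b = c.
Proof.
  intro H. assert (E: vadd (vopp a) (vadd a b) = vadd (vopp a) (vadd a c)) by now rewrite H.
  rewrite !vadd_assoc in E. rewrite (vadd_comm _ (vopp a) a), vadd_opp, !vadd_zero_l in E. exact E.
Qed.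

Lemma vscal_zero (V : RVectorSpace) (x:V) : vscal 0 x = vzero.
Proof.
  apply (vadd_cancel _ (vscal 0 x)). rewrite vadd_zero, <- vscal_distr_s. f_equal; ring.
Qed.

Lemma vopp_scal (V : RVectorSpace) (x:V) : vopp x = vscal (-1) x.
Proof.
  apply (vadd_cancel _ x). rewrite vadd_opp.
  rewrite <- (vscal_one V x) at 1. rewrite <- vscal_distr_s.
  replace (1 + -1) with 0 by ring. rewrite vscal_zero. reflexivity.
Qed.

Lemma vsub_add (V : RVectorSpace) (p q r : V) : vsub p r = vadd (vsub p q) (vsub q r).
Proof.
  unfold vsub. rewrite <- vadd_assoc. f_equal.
  rewrite vadd_assoc, (vadd_comm _ (vopp q) q), vadd_opp, vadd_zero_l. reflexivity.
Qed.

Lemma vsub_self (V : RVectorSpace) (p : V) : vsub p p = vzero.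
Proof. unfold vsub. apply vadd_opp. Qed.

Lemma vopp_vsub (V : RVectorSpace) (p q : V) : vopp (vsub p q) = vsub q p.
Proof.
  apply (vadd_cancel _ (vsub p q)). rewrite vadd_opp, <- vsub_add, vsub_self. reflexivity.
Qed.

Lemma vsub_vsub (V : RVectorSpace) (p y : V) : vsub p (vsub p y) = y.
Proof.
  unfold vsub at 1. rewrite vopp_vsub. unfold vsub.
  rewrite vadd_comm, <- vadd_assoc, (vadd_comm _ (vopp p) p), vadd_opp, vadd_zero. reflexivity.
Qed.

Lemma vadd_vsub (V : RVectorSpace) (y z : V) : vadd z (vsub y z) = y.
Proof.
  unfold vsub. rewrite vadd_assoc, (vadd_comm _ z y), <- vadd_assoc, vadd_opp, vadd_zero. reflexivity.
Qed.

Lemma lin_opp (V W : RVectorSpace) (T : V -> W) (x : V) : is_linear T -> T (vopp x) = vopp (T x).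
Proof. intros [_ HS]. rewrite !vopp_scal, HS. reflexivity. Qed.

Lemma lin_sub (V W : RVectorSpace) (T : V -> W) (x y : V) : is_linear T -> T (vsub x y) = vsub (T x) (T y).
Proof. intros HL. unfold vsub. rewrite (proj1 HL), lin_opp by exact HL. reflexivity. Qed.

Lemma pn_bounds (U : RVectorSpace) (mu : U -> R -> R) (H : is_PN_space U mu) z x : 0 <= mu z x <= 1.
Proof. destruct (pn_ddf _ _ H z) as [[Hb _] _]. apply Hb. Qed.

Lemma pn_mono (U : RVectorSpace) (mu : U -> R -> R) (H : is_PN_space U mu) z x y : x <= y -> mu z x <= mu z y.
Proof. destruct (pn_ddf _ _ H z) as [[_ [Hm _]] _]. apply Hm. Qed.

Lemma pn_at0 (U : RVectorSpace) (mu : U -> R -> R) (H : is_PN_space U mu) z : mu z 0 = 0.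
Proof. destruct (pn_ddf _ _ H z) as [[_ [_ [_ H0]]] _]. exact H0. Qed.

Lemma pn_nonpos (U : RVectorSpace) (mu : U -> R -> R) (H : is_PN_space U mu) z x : x <= 0 -> mu z x = 0.
Proof.
  intro Hx. pose proof (pn_mono _ _ H z _ _ Hx). pose proof (pn_bounds _ _ H z x).
  rewrite pn_at0 in * by exact H. lra.
Qed.

Lemma pn_zero (U : RVectorSpace) (mu : U -> R -> R) (H : is_PN_space U mu) x : mu vzero x = H0 x.
Proof. apply (proj2 (pn_H0 _ _ H vzero)). reflexivity. Qed.

Lemma pn_opp (U : RVectorSpace) (mu : U -> R -> R) (H : is_PN_space U mu) z x : mu (vopp z) x = mu z x.
Proof.
  destruct (Rle_dec x 0) as [Hx|Hx].
  - rewrite !(pn_nonpos _ _ H) by exact Hx. reflexivity.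
  - rewrite vopp_scal, (pn_scal _ _ H) by lra.
    replace (Rabs (-1)) with 1 by (unfold Rabs; destruct (Rcase_abs (-1)); lra). f_equal. field.
Qed.

Lemma pn_triangle (U : RVectorSpace) (mu : U -> R -> R) (H : is_PN_space U mu) p q s t :
  Rmin (mu p s) (mu q t) <= mu (vadd p q) (s + t).
Proof.
  destruct (completeness (tauM_set (mu p) (mu q) (s+t))) as [y Hy].
  - exists 1. intros v [s' [t' [_ ->]]].
    pose proof (pn_bounds _ _ H p s'). pose proof (Rmin_l (mu p s') (mu q t')). lra.
  - exists (Rmin (mu p s) (mu q t)). exists s, t. split; reflexivity.
  - pose proof (pn_tri _ _ H p q (s+t) y Hy) as Ht.
    assert (Rmin (mu p s) (mu q t) <= y).
    { apply (proj1 Hy). exists s, t. split; reflexivity. }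
    lra.
Qed.

Lemma pnorm_lub (U : RVectorSpace) (mu : U -> R -> R) (H : is_PN_space U mu) w z :
  0 < w < 1 -> is_lub (fun t => mu z t < w) (pnorm mu w z).
Proof.
  intro Hw. unfold pnorm, Rsup_of. apply epsilon_spec.
  destruct (completeness (fun t => mu z t < w)) as [y Hy].
  - destruct (pn_ddf _ _ H z) as [_ Hp]. destruct (Hp (1 - w)) as [M HM]; [lra|].
    exists M. intros t Ht. destruct (Rle_dec t M) as [|Hn]; [assumption|].
    exfalso. specialize (HM t ltac:(lra)). apply Rabs_def2 in HM. lra.
  - exists 0. rewrite (pn_at0 _ _ H). lra.
  - exists y. exact Hy.
Qed.

Lemma pnorm_ge0 (U : RVectorSpace) (mu : U -> R -> R) (H : is_PN_space U mu) w z :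
  0 < w < 1 -> 0 <= pnorm mu w z.
Proof.
  intro Hw. apply (proj1 (pnorm_lub _ _ H w z Hw)). simpl. rewrite (pn_at0 _ _ H). lra.
Qed.

Lemma pnorm_le_char (U : RVectorSpace) (mu : U -> R -> R) (H : is_PN_space U mu) w z r :
  0 < w < 1 -> (forall s, r < s -> w <= mu z s) -> pnorm mu w z <= r.
Proof.
  intros Hw Hs. apply (proj2 (pnorm_lub _ _ H w z Hw)). intros t Ht.
  destruct (Rle_dec t r) as [|Hn]; [assumption|]. specialize (Hs t ltac:(lra)). simpl in Ht. lra.
Qed.

Lemma pnorm_le_inv (U : RVectorSpace) (mu : U -> R -> R) (H : is_PN_space U mu) w z r s :
  0 < w < 1 -> pnorm mu w z <= r -> r < s -> w <= mu z s.
Proof.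
  intros Hw Hp Hrs. destruct (Rle_dec w (mu z s)) as [|Hn]; [assumption|].
  assert (s <= pnorm mu w z) by (apply (proj1 (pnorm_lub _ _ H w z Hw)); simpl; lra). lra.
Qed.

Lemma pnorm_triangle (U : RVectorSpace) (mu : U -> R -> R) (H : is_PN_space U mu) w u v :
  0 < w < 1 -> pnorm mu w (vadd u v) <= pnorm mu w u + pnorm mu w v.
Proof.
  intro Hw. apply (pnorm_le_char _ _ H w _ _ Hw). intros s Hs.
  set (e := s - pnorm mu w u - pnorm mu w v).
  assert (H1 : w <= mu u (pnorm mu w u + e/2)) by (apply (pnorm_le_inv _ _ H w u (pnorm mu w u)); unfold e; lra).
  assert (H2 : w <= mu v (pnorm mu w v + e/2)) by (apply (pnorm_le_inv _ _ H w v (pnorm mu w v)); unfold e; lra).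
  pose proof (pn_triangle _ _ H u v (pnorm mu w u + e/2) (pnorm mu w v + e/2)) as Ht.
  replace (pnorm mu w u + e / 2 + (pnorm mu w v + e / 2)) with s in Ht by (unfold e; lra).
  pose proof (Rmin_glb _ _ _ H1 H2). lra.
Qed.

Lemma pnorm_scal (U : RVectorSpace) (mu : U -> R -> R) (H : is_PN_space U mu) w u a :
  0 < w < 1 -> a <> 0 -> pnorm mu w (vscal a u) <= Rabs a * pnorm mu w u.
Proof.
  intros Hw Ha. apply (pnorm_le_char _ _ H w _ _ Hw). intros s Hs.
  pose proof (pnorm_ge0 _ _ H w u Hw). pose proof (Rabs_pos_lt a Ha).
  assert (Hs0 : 0 <= s) by nra.
  rewrite (pn_scal _ _ H) by assumption.
  apply (pnorm_le_inv _ _ H w u (pnorm mu w u)); [assumption|lra|].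
  set (b := Rabs a) in *. set (s' := s / b).
  assert (s = s' * b) by (unfold s'; field; lra). nra.
Qed.

Lemma pnorm_opp (U : RVectorSpace) (mu : U -> R -> R) (H : is_PN_space U mu) w u :
  0 < w < 1 -> pnorm mu w (vopp u) <= pnorm mu w u.
Proof.
  intros Hw. apply (pnorm_le_char _ _ H w _ _ Hw). intros s Hs.
  rewrite (pn_opp _ _ H). apply (pnorm_le_inv _ _ H w u (pnorm mu w u)); lra.
Qed.

Lemma pnorm_gt (U : RVectorSpace) (mu : U -> R -> R) (H : is_PN_space U mu) w z k :
  0 < w < 1 -> k < pnorm mu w z -> exists s, k < s /\ mu z s < w.
Proof.
  intros Hw Hk. apply NNPP. intro Hn.
  assert (pnorm mu w z <= k).
  { apply (pnorm_le_char _ _ H w _ _ Hw). intros s Hs.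
    apply Rnot_lt_le. intro Hl. apply Hn. exists s. split; assumption. }
  lra.
Qed.

Lemma Nbhd_pos (U : RVectorSpace) (mu : U -> R -> R) (H : is_PN_space U mu) p q t :
  Nbhd mu p t q -> 0 < t.
Proof. unfold Nbhd. intro Hn. pose proof (pn_bounds _ _ H (vsub p q) t). lra. Qed.

Lemma Nbhd_mono (U : RVectorSpace) (mu : U -> R -> R) (H : is_PN_space U mu) p q s s' :
  s <= s' -> Nbhd mu p s q -> Nbhd mu p s' q.
Proof.
  unfold Nbhd. intros Hs Hn. pose proof (pn_mono _ _ H (vsub p q) _ _ Hs). lra.
Qed.

Lemma Nbhd_sym (U : RVectorSpace) (mu : U -> R -> R) (H : is_PN_space U mu) p q t :
  Nbhd mu p t q -> Nbhd mu q t p.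
Proof. unfold Nbhd. rewrite <- vopp_vsub, (pn_opp _ _ H). auto. Qed.

Lemma Nbhd_trans (U : RVectorSpace) (mu : U -> R -> R) (H : is_PN_space U mu) p q r s t :
  Nbhd mu p s q -> Nbhd mu q t r -> Nbhd mu p (s + t) r.
Proof.
  intros H1 H2. pose proof (Nbhd_pos _ _ H _ _ _ H1). pose proof (Nbhd_pos _ _ H _ _ _ H2).
  unfold Nbhd in *. rewrite (vsub_add _ p q r).
  pose proof (pn_triangle _ _ H (vsub p q) (vsub q r) s t).
  assert (1 - (s+t) <= Rmin (mu (vsub p q) s) (mu (vsub q r) t) - 0) .
  { unfold Rmin. destruct (Rle_dec _ _); lra. }
  destruct (Rle_dec (mu (vsub p q) s) (mu (vsub q r) t));
  unfold Rmin in *; destruct (Rle_dec _ _); lra.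
Qed.

Lemma Nbhd_refl (U : RVectorSpace) (mu : U -> R -> R) (H : is_PN_space U mu) p t :
  0 < t -> Nbhd mu p t p.
Proof.
  intro Ht. unfold Nbhd. rewrite vsub_self, (pn_zero _ _ H). unfold H0.
  destruct (Rle_dec t 0); lra.
Qed.

Lemma open_gt (U : RVectorSpace) (mu : U -> R -> R) (H : is_PN_space U mu) w k :
  0 < w < 1 -> strong_open mu (fun y => k < pnorm mu w y).
Proof.
  intros Hw y Hy. destruct (pnorm_gt _ _ H w y k Hw Hy) as [s [Hks Hs]].
  exists (Rmin ((s - k)/2) (1 - w)). split.
  { apply Rmin_glb_lt; lra. }
  intros z Hz. unfold Nbhd in Hz.
  pose proof (Rmin_l ((s - k)/2) (1 - w)). pose proof (Rmin_r ((s - k)/2) (1 - w)).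
  set (t := Rmin ((s - k)/2) (1 - w)) in *.
  apply Rnot_le_lt. intro Hzk.
  assert (Hz1 : w <= mu z ((k + s)/2)) by (apply (pnorm_le_inv _ _ H w z k); lra).
  pose proof (pn_triangle _ _ H z (vsub y z) ((k+s)/2) t) as Ht.
  rewrite vadd_vsub in Ht.
  assert (Hm : w <= Rmin (mu z ((k + s) / 2)) (mu (vsub y z) t)) by (apply Rmin_glb; lra).
  pose proof (pn_mono _ _ H y ((k + s) / 2 + t) s ltac:(lra)). lra.
Qed.

Lemma dep_seq (A : Type) (a0 : A) (P : nat -> A -> A -> Prop) :
  (forall k a, exists b, P k a b) -> exists s : nat -> A, s 0%nat = a0 /\ forall k, P k (s k) (s (S k)).
Proof.
  intro Hex.
  set (step := fun k a => epsilon (inhabits a0) (P k a)).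
  exists (fun n => nat_rect (fun _ => A) a0 step n). split; [reflexivity|].
  intro k. simpl. unfold step at 1. apply epsilon_spec. apply Hex.
Qed.

Lemma baire_part (V W : RVectorSpace) (nu : V -> R -> R) (mu : W -> R -> R)
  (T : nat -> V -> W) (w' : R) :
  is_PN_space V nu -> is_PN_space W mu -> strongly_complete nu ->
  (forall n, in_B nu mu (T n)) ->
  (forall (x : V), exists M, forall n, pnorm mu w' (T n x) <= M) ->
  0 < w' < 1 ->
  exists (k:nat) (p:V) t, 0 < t /\ forall q, Nbhd nu p t q -> forall n, pnorm mu w' (T n q) <= INR k.
Proof.
  intros HV HW Hc HB Hpt Hw'.
  apply NNPP; intro Hn.
  assert (Hneg: forall k p t, 0 < t -> exists q, Nbhd nu p t q /\ exists n, INR k < pnorm mu w' (T n q)).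
  { intros k p t Ht. apply NNPP; intro Hq. apply Hn. exists k, p, t. split; [exact Ht|].
    intros q Hq' n. apply Rnot_lt_le. intro Hlt. apply Hq. exists q; split; [exact Hq'| exists n; exact Hlt]. }
  set (P := fun (k:nat) (a b : V * R) => 0 < snd a -> (0 < snd b /\ snd b <= snd a / 2 /\
     snd b <= / (INR k + 2) /\ Nbhd nu (fst a) (snd a) (fst b) /\
     forall z, Nbhd nu (fst b) (3 * snd b) z -> exists n, INR k < pnorm mu w' (T n z))).
  assert (Hex : forall k a, exists b, P k a b).
  { intros k [x t]. destruct (Rlt_dec 0 t) as [Ht|Ht].
    2:{ exists (x, t). intro; simpl in *; lra. }
    destruct (Hneg k x t Ht) as [q [Hq [n Hnq]]].
    destruct (proj2 (HB n) _ (open_gt _ _ HW w' (INR k) Hw') q Hnq) as [s [Hs Hsq]].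
    assert (Hk : 0 < / (INR k + 2)) by (apply Rinv_0_lt_compat; pose proof (pos_INR k); lra).
    pose proof (Rmin_l (s/3) (Rmin (t/2) (/ (INR k + 2)))).
    pose proof (Rmin_r (s/3) (Rmin (t/2) (/ (INR k + 2)))).
    pose proof (Rmin_l (t/2) (/ (INR k + 2))).
    pose proof (Rmin_r (t/2) (/ (INR k + 2))).
    set (t' := Rmin (s/3) (Rmin (t/2) (/ (INR k + 2)))) in *.
    assert (0 < t') by (unfold t'; apply Rmin_glb_lt; [lra| apply Rmin_glb_lt; lra]).
    exists (q, t'). intros _. simpl.
    split; [lra|split;[lra|split;[lra|split;[exact Hq|]]]].
    intros z Hz. exists n. apply Hsq. apply (Nbhd_mono _ _ HV _ _ (3 * t')); [lra|exact Hz]. }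
  destruct (dep_seq _ (vzero, 1) P Hex) as [sq [Hs0 Hs]].
  set (x := fun k => fst (sq k)). set (t := fun k => snd (sq k)).
  assert (Htpos : forall k, 0 < t k).
  { induction k. - unfold t. rewrite Hs0. simpl. lra.
    - apply (Hs k IHk). }
  assert (HP : forall k, 0 < t (S k) /\ t (S k) <= t k / 2 /\ t (S k) <= / (INR k + 2) /\
     Nbhd nu (x k) (t k) (x (S k)) /\
     forall z, Nbhd nu (x (S k)) (3 * t (S k)) z -> exists n, INR k < pnorm mu w' (T n z)).
  { intro k. exact (Hs k (Htpos k)). }
  assert (Htb : forall k, t k <= / (INR k + 1)).
  { intros [|k]. - unfold t. rewrite Hs0. simpl. lra.
    - rewrite S_INR. replace (INR k + 1 + 1) with (INR k + 2) by ring. apply HP. }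
  assert (Hchain : forall d k, Nbhd nu (x k) (2 * t k - 2 * t (k + S d)%nat) (x (k + S d)%nat)).
  { induction d; intro k.
    - rewrite Nat.add_1_r. destruct (HP k) as [_ [H2 [_ [H4 _]]]].
      apply (Nbhd_mono _ _ HV _ _ (t k)); [lra|exact H4].
    - replace (k + S (S d))%nat with (S (k + S d)) by lia.
      destruct (HP (k + S d)%nat) as [H1 [H2 [_ [H4 _]]]].
      pose proof (Nbhd_trans _ _ HV _ _ _ _ _ (IHd k) H4).
      eapply (Nbhd_mono _ _ HV); [|exact H]; lra. }
  assert (Hlt : forall k m, (k < m)%nat -> Nbhd nu (x k) (2 * t k) (x m)).
  { intros k m Hkm. replace m with (k + S (m - k - 1))%nat by lia.
    pose proof (Htpos (k + S (m - k - 1))%nat).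
    eapply (Nbhd_mono _ _ HV); [|exact (Hchain _ k)]; lra. }
  assert (Hcauchy : strong_cauchy nu x).
  { intros e He. destruct (nat_arch (4 / e)) as [N HN]. exists N. intros m n Hm Hn2.
    pose proof (Nbhd_sym _ _ HV _ _ _ (Hlt N n Hn2)) as A1.
    pose proof (Nbhd_trans _ _ HV _ _ _ _ _ A1 (Hlt N m Hm)) as A2.
    apply (Nbhd_mono _ _ HV _ _ (2 * t N + 2 * t N)); [|exact A2].
    pose proof (Htb N). pose proof (pos_INR N).
    set (a := INR N + 1) in *.
    assert (Ha : 0 < a) by (unfold a; lra).
    assert (4 / e * e = 4) by (field; lra).
    assert ((a - 4/e) * e > 0) by (apply Rmult_lt_0_compat; unfold a; lra).
    assert (4 < a * e) by nra.
    assert (a * / a = 1) by (field; lra).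
    pose proof (Rinv_0_lt_compat a Ha). nra. }
  destruct (Hc x Hcauchy) as [l Hl].
  destruct (Hpt l) as [M HM].
  destruct (nat_arch M) as [k Hk].
  destruct (HP k) as [H1 [_ [_ [_ H5]]]].
  destruct (Hl (t (S k) / 2) ltac:(lra)) as [N HN].
  set (m := (S (S k) + N)%nat).
  pose proof (Nbhd_sym _ _ HV _ _ _ (HN m ltac:(unfold m; lia))) as B1.
  pose proof (Nbhd_trans _ _ HV _ _ _ _ _ (Hlt (S k) m ltac:(unfold m; lia)) B1) as B2.
  assert (B3 : Nbhd nu (x (S k)) (3 * t (S k)) l) by (eapply (Nbhd_mono _ _ HV); [|exact B2]; lra).
  destruct (H5 l B3) as [n Hnl].
  specialize (HM n). lra.
Qed.

Theorem theorem4p11 (V W : RVectorSpace) (nu : V -> R -> R) (mu : W -> R -> R)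
  (T : nat -> V -> W) :
  is_PN_space V nu -> is_PN_space W mu -> strongly_complete nu ->
  (forall n, in_B nu mu (T n)) ->
  (forall (x : V) (w' : R), 0 < w' < 1 ->
     exists M, forall n, pnorm mu w' (T n x) <= M) ->
  forall w', 0 < w' < 1 ->
    exists w, 0 < w < 1 /\
      exists M, forall n (x : V), pnorm nu w x <= 1 -> pnorm mu w' (T n x) <= M.
Proof.
  intros HV HW Hc HB Hpt w' Hw'.
  destruct (baire_part V W nu mu T w' HV HW Hc HB (fun x => Hpt x w' Hw') Hw') as [k [p [t [Ht Hk]]]].
  set (t1 := Rmin t 1).
  assert (Ht1 : 0 < t1 <= 1) by (unfold t1; split; [apply Rmin_glb_lt; lra | apply Rmin_r]).
  assert (Ht1t : t1 <= t) by apply Rmin_l.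
  exists (1 - t1/2). split; [lra|].
  exists (2 / t1 * (INR k + INR k)). intros n x Hx.
  assert (Hw : 0 < 1 - t1/2 < 1) by lra.
  set (y := vscal (t1/2) x).
  assert (Hny : Nbhd nu p t (vsub p y)).
  { apply (Nbhd_mono _ _ HV _ _ t1); [exact Ht1t|].
    unfold Nbhd. rewrite vsub_vsub. unfold y. rewrite (pn_scal _ _ HV) by lra.
    rewrite Rabs_pos_eq by lra. replace (t1 / (t1/2)) with 2 by (field; lra).
    pose proof (pnorm_le_inv _ _ HV _ x 1 2 Hw Hx ltac:(lra)). lra. }
  pose proof (Hk _ Hny n) as Hq.
  pose proof (Hk _ (Nbhd_refl _ _ HV p t Ht) n) as Hp.
  destruct (HB n) as [HL _].
  assert (Ey : T n y = vsub (T n p) (T n (vsub p y))).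
  { rewrite <- lin_sub by exact HL. rewrite vsub_vsub. reflexivity. }
  assert (Hy : pnorm mu w' (T n y) <= INR k + INR k).
  { rewrite Ey. unfold vsub at 1.
    pose proof (pnorm_triangle _ _ HW w' (T n p) (vopp (T n (vsub p y))) Hw').
    pose proof (pnorm_opp _ _ HW w' (T n (vsub p y)) Hw'). lra. }
  assert (Ex : x = vscal (2/t1) y).
  { unfold y. rewrite vscal_assoc. replace (2 / t1 * (t1 / 2)) with 1 by (field; lra).
    rewrite vscal_one. reflexivity. }
  rewrite Ex, (proj2 HL).
  assert (Hne : 2 / t1 <> 0) by (apply Rgt_not_eq; apply Rdiv_lt_0_compat; lra).
  pose proof (pnorm_scal _ _ HW w' (T n y) (2/t1) Hw' Hne).
  rewrite Rabs_pos_eq in H by (apply Rlt_le, Rdiv_lt_0_compat; lra).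
  assert (0 < 2 / t1) by (apply Rdiv_lt_0_compat; lra).
  pose proof (Rmult_le_compat_l (2/t1) _ _ (Rlt_le _ _ H0) Hy). lra.
Qed.
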